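(* Let $(X,d)$ be a Hadamard space, $\mathbf a$ a mask, $S$ the associated barycentric scheme, and $(X_n^{\mathbf a})_{n\ge0}$ the characteristic Markov chain of $\mathbf a$. Let $x\in\ell^\infty(\mathbb Z^s,X)$ and $n\in\mathbb N$. Then for every initial distribution $\alpha$ on $\mathbb Z^s$, $$(S^nx)\circ X_0^{\mathbf a}=E\big(x\circ X_n^{\mathbf a}\,\big|\big|\big|\,\mathcal F_0\big)\quad \mathbb P_\alpha\text{-almost surely},$$ where the filtered conditional expectation is taken with respect to the filtration $\mathcal F_0\subseteq\mathcal F_1\subseteq\dots\subseteq\mathcal F_n$ and the measure $\mathbb P_\alpha$.
   Context: Hadamard space: complete metric space $(X,d)$ such that for any $x_0,x_1\in X$ there is $y$ with $d(z,y)^2\le\frac12d(z,x_0)^2+\frac12d(z,x_1)^2-\frac14d(x_0,x_1)^2$ for all $z$. Mask: finitely supported nonnegative $(a_i)_{i\in\mathbb Z^s}$ with $\sum_j a_{i-2j}=1$ for all $i$. Barycentric scheme: $Sx_i=\operatorname{argmin}_{y\in X}\sum_j a_{i-2j}d^2(x_j,y)$ on $\ell^\infty(\mathbb Z^s,X)$. Define $a^{(0)}_i=\delta_{i,0}$ and $a^{(n+1)}_i=\sum_{j}a_{i-2j}a^{(n)}_j$. Characteristic Markov chain: on $\Omega=(\mathbb Z^s)^{\mathbb N_0}$ with product $\sigma$-algebra $\mathcal F$, let $X_n^{\mathbf a}(\omega)=\omega_n$, let $\mathcal F_n$ be the $\sigma$-algebra generated by $X_0^{\mathbf a},\dots,X_n^{\mathbf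 a}$, and for a probability distribution $\alpha$ on $\mathbb Z^s$ let $\mathbb P_\alpha$ be the probability measure with $\mathbb P_\alpha(X_0=i_0,\dots,X_n=i_n)=\alpha_{i_0}\prod_{k=1}^n a_{i_{k-1}-2i_k}$; its $m$-step transition probabilities are $p_{n,n+m}(i,j)=a^{(m)}_{i-2^mj}$. Conditional expectation (Sturm): for a sub-$\sigma$-algebra $\mathcal G$ and a square-integrable $X$-valued random variable $Y$ with separable image, $E(Y|\mathcal G)$ is the a.s. unique $\mathcal G$-measurable square-integrable $Z$ minimizing $Z'\mapsto E\,d^2(Y,Z')$ over $\mathcal G$-measurable square-integrable $Z'$. Filtered conditional expectation: for $\mathcal F_0\subseteq\dots\subseteq\mathcal F_N$ and $\mathcal F_N$-measurable $Y$, $E(Y|||\mathcal F_0)=E(\cdots E(E(Y|\mathcal F_{N-1})|\mathcal F_{N-2})\cdots|\mathcal F_0)$. *)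

(* Defs.v *)
From HB Require Import structures.
From mathcomp Require Import all_boot all_order all_algebra.
From mathcomp Require Import all_classical all_reals all_analysis.
From Stdlib Require Import ClassicalEpsilon.
Import Order.TTheory GRing.Theory Num.Theory.
Import numFieldNormedType.Exports.

Set Implicit Arguments.
Unset Strict Implicit.
Unset Printing Implicit Defensive.

Local Open Scope classical_set_scope.
Local Open Scope ring_scope.

Section Hadamard.
Variables (R : realType) (X : Type) (d : X -> X -> R).

Definition is_metric : Prop :=
  [/\ (forall x y, 0 <= d x y),
      (forall x y, d x y = 0 <-> x = y),
      (forall x y, d x y = d y x) &
      (forall x y z, d x z <= d x y + d y z)].

Definition metric_complete : Prop :=
  forall u : nat -> X,
    (forall e : R, 0 < e -> exists N : nat,
        forall m k : nat, (N <= m)%N -> (N <= k)%N -> d (u m) (u k) < e) ->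
    exists l : X, forall e : R, 0 < e -> exists N : nat,
        forall k : nat, (N <= k)%N -> d (u k) l < e.

Definition hadamard : Prop :=
  [/\ is_metric, metric_complete &
      forall x0 x1 : X, exists y : X, forall z : X,
        d z y ^+ 2 <= 2^-1 * d z x0 ^+ 2 + 2^-1 * d z x1 ^+ 2
                      - 4^-1 * d x0 x1 ^+ 2].

Definition openX (U : set X) : Prop :=
  forall x, U x -> exists e : R, 0 < e /\ forall y, d x y < e -> U y.

Definition separable_range (T : Type) (Y : T -> X) : Prop :=
  exists e : nat -> X, forall (w : T) (eps : R), 0 < eps ->
    exists k : nat, d (e k) (Y w) < eps.

(* a (the) minimizer of f, chosen by Hilbert's epsilon; x0 only witnesses
   that X is inhabited *)
Definition argmin (x0 : X) (f : X -> R) : X :=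
  epsilon (inhabits x0) (fun y => forall z, f y <= f z).

End Hadamard.

Notation Zs s := 'rV[int]_s.

Section Scheme.
Variables (R : realType) (s : nat).

Definition is_mask (a : Zs s -> R) : Prop :=
  [/\ (forall i, 0 <= a i),
      (exists r : seq (Zs s), forall i, i \notin r -> a i = 0) &
      (forall i, \sum_(j \in [set: Zs s]) a (i - j *+ 2) = 1)].

Variables (X : Type) (d : X -> X -> R).

Definition bounded_seq (x : Zs s -> X) : Prop :=
  exists M : R, forall i j, d (x i) (x j) <= M.

Definition scheme (a : Zs s -> R) (x : Zs s -> X) : Zs s -> X :=
  fun i => argmin (x i)
    (fun y => \sum_(j \in [set: Zs s]) a (i - j *+ 2) * d (x j) y ^+ 2).

End Scheme.

Definition Omega (s : nat) := nat -> Zs s.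
HB.instance Definition _ (s : nat) := gen_eqMixin (Omega s).
HB.instance Definition _ (s : nat) := gen_choiceMixin (Omega s).
HB.instance Definition _ (s : nat) :=
  isPointed.Build (Omega s) (fun _ => 0).

Definition Xn (s : nat) (k : nat) (w : Omega s) : Zs s := w k.

Definition coord_sets (s : nat) (m : option nat) : set (set (Omega s)) :=
  [set B | exists (k : nat) (A : set (Zs s)),
     (if m is Some m' then (k <= m')%N else True) /\ B = Xn k @^-1` A].

Arguments coord_sets : clear implicits.
Arguments Xn {s} k w.

Definition OmegaT (s : nat) := g_sigma_algebraType (coord_sets s None).

Definition Ffilt (s : nat) (m : nat) : set (set (OmegaT s)) :=
  <<s coord_sets s (Some m) >>.
Arguments Ffilt : clear implicits.

Definition is_distribution (R : realType) (s : nat) (alpha : Zs s -> R) : Prop :=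
  (forall i, 0 <= alpha i) /\ (\esum_(i in [set: Zs s]) (alpha i)%:E = 1)%E.

Definition is_chain_law (R : realType) (s : nat) (a alpha : Zs s -> R)
    (P : probability (OmegaT s) R) : Prop :=
  forall (m : nat) (i : nat -> Zs s),
    P [set w : OmegaT s | forall k, (k <= m)%N -> Xn k w = i k] =
    (alpha (i 0%N) * \prod_(k < m) a (i k - i k.+1 *+ 2))%:E.

Section CondExp.
Variables (R : realType) (X : Type) (d : X -> X -> R) (s : nat)
  (P : probability (OmegaT s) R).

Definition measurable_wrt (G : set (set (OmegaT s))) (Y : OmegaT s -> X) : Prop :=
  forall U : set X, openX d U -> G (Y @^-1` U).

Definition square_integrable (Y : OmegaT s -> X) : Prop :=
  exists z : X, (\int[P]_w ((d (Y w) z) ^+ 2)%:E < +oo)%E.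

Definition L2 (G : set (set (OmegaT s))) (Y : OmegaT s -> X) : Prop :=
  [/\ measurable_wrt G Y, separable_range d Y & square_integrable Y].

Definition is_condexp (G : set (set (OmegaT s))) (Y Z : OmegaT s -> X) : Prop :=
  L2 G Z /\
  forall Z' : OmegaT s -> X, L2 G Z' ->
    (\int[P]_w ((d (Y w) (Z w)) ^+ 2)%:E <=
     \int[P]_w ((d (Y w) (Z' w)) ^+ 2)%:E)%E.

Definition is_filtered_condexp (F : nat -> set (set (OmegaT s))) (N : nat)
    (Y Z0 : OmegaT s -> X) : Prop :=
  exists Z : nat -> OmegaT s -> X,
    [/\ Z N = Y, Z 0%N = Z0 &
        forall k, (k < N)%N -> is_condexp (F k) (Z k.+1) (Z k)].

End CondExp.

(* Main.v *)
Require Import Defs.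
From HB Require Import structures.
From mathcomp Require Import all_boot all_order all_algebra.
From mathcomp Require Import all_classical all_reals all_analysis.
From mathcomp Require Import ring lra measurable_realfun.
From Stdlib Require Import ClassicalEpsilon.
Import Order.TTheory GRing.Theory Num.Theory.
Import numFieldNormedType.Exports.
Local Open Scope classical_set_scope.
Local Open Scope ring_scope.
Set Implicit Arguments.
Unset Strict Implicit.

Section HadFacts.
Variables (R : realType) (X : Type) (d : X -> X -> R).
Hypothesis hd : hadamard d.

Lemma d_ge0 x y : 0 <= d x y. Proof. by case: hd => -[]. Qed.
Lemma d_eq0 x y : d x y = 0 <-> x = y. Proof. by case: hd => -[]. Qed.
Lemma d_xx x : d x x = 0. Proof. exact/d_eq0. Qed.
Lemma d_sym x y : d x y = d y x. Proof. by case: hd => -[]. Qed.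
Lemma d_tri x y z : d x z <= d x y + d y z. Proof. by case: hd => -[]. Qed.
Lemma d_mid x0 x1 : exists y, forall z,
  d z y ^+ 2 <= 2^-1 * d z x0 ^+ 2 + 2^-1 * d z x1 ^+ 2 - 4^-1 * d x0 x1 ^+ 2.
Proof. by case: hd => _ _; apply. Qed.
Lemma d_complete : metric_complete d. Proof. by case: hd. Qed.

Variables (I : Type) (J : seq I) (w : I -> R) (p : I -> X).
Hypothesis w_ge0 : forall j, 0 <= w j.
Hypothesis w_sum : \sum_(j <- J) w j = 1.

Definition Fw z := \sum_(j <- J) w j * d (p j) z ^+ 2.

Lemma Fw_ge0 z : 0 <= Fw z.
Proof. by apply: sumr_ge0 => j _; apply: mulr_ge0 => //; apply: sqr_ge0. Qed.

Lemma Fw_mid z1 z2 : exists m,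
  Fw m <= 2^-1 * Fw z1 + 2^-1 * Fw z2 - 4^-1 * d z1 z2 ^+ 2.
Proof.
have [m hm] := d_mid z1 z2; exists m.
rewrite /Fw.
have -> : 2^-1 * \sum_(j <- J) w j * d (p j) z1 ^+ 2 +
   2^-1 * \sum_(j <- J) w j * d (p j) z2 ^+ 2 - 4^-1 * d z1 z2 ^+ 2 =
   \sum_(j <- J) w j * (2^-1 * d (p j) z1 ^+ 2 + 2^-1 * d (p j) z2 ^+ 2
                         - 4^-1 * d z1 z2 ^+ 2).
  rewrite [RHS](eq_bigr (fun j => 2^-1 * (w j * d (p j) z1 ^+ 2) +
     2^-1 * (w j * d (p j) z2 ^+ 2) - w j * (4^-1 * d z1 z2 ^+ 2))); last first.
    by move=> j _; ring.
  by rewrite sumrB big_split /= -mulr_suml -!mulr_sumr w_sum mul1r.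
by apply: ler_sum => j _; apply: ler_wpM2l.
Qed.

Lemma Fw_unique z v : (forall z', Fw z <= Fw z') -> Fw v <= Fw z -> v = z.
Proof.
move=> zmin vle; have [m hm] := Fw_mid v z.
have := zmin m => h.
have hd2 : d v z ^+ 2 <= 0.
  have := le_trans h hm; have := zmin v; lra.
apply/d_eq0; apply/eqP; rewrite -sqrf_eq0 eq_le hd2 /=; exact: sqr_ge0.
Qed.

Lemma sqr_tri x y z : d x z ^+ 2 <= 2 * d x y ^+ 2 + 2 * d y z ^+ 2.
Proof.
have h := d_tri x y z; have h1 := d_ge0 x z; have h2 := d_ge0 x y;
 have h3 := d_ge0 y z.
have h4 : d x z ^+ 2 <= (d x y + d y z) ^+ 2.
  by rewrite ler_sqr ?nnegrE //; apply: addr_ge0.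
have h5 : 0 <= (d x y - d y z) ^+ 2 by apply: sqr_ge0.
nra.
Qed.

Lemma Fw_bound m c : d m c ^+ 2 <= 2 * Fw m + 2 * Fw c.
Proof.
have -> : d m c ^+ 2 = \sum_(j <- J) w j * d m c ^+ 2.
  by rewrite -mulr_suml w_sum mul1r.
rewrite /Fw !mulr_sumr -big_split /=.
apply: ler_sum => j _.
have := sqr_tri m (p j) c; rewrite [d m (p j)]d_sym => h.
have := w_ge0 j; nra.
Qed.


Lemma Fw_cont z l : Fw l <= Fw z + 2 * d z l * (Fw z + 1) + d z l ^+ 2.
Proof.
have -> : Fw z + 2 * d z l * (Fw z + 1) + d z l ^+ 2 =
  \sum_(j <- J) w j * (d (p j) z ^+ 2 + 2 * d z l * (d (p j) z ^+ 2 + 1)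
      + d z l ^+ 2).
  rewrite (eq_bigr (fun j => w j * d (p j) z ^+ 2 + (2 * d z l) *
     (w j * d (p j) z ^+ 2 + w j) + w j * d z l ^+ 2)); last by move=> j _; ring.
  rewrite !big_split /= -!mulr_sumr -mulr_suml big_split /= -/(Fw z) w_sum.
  by rewrite mul1r.
apply: ler_sum => j _; apply: ler_wpM2l => //.
have h := d_tri (p j) z l; have h1 := d_ge0 (p j) l; have h2 := d_ge0 (p j) z.
have h3 := d_ge0 z l.
have h4 : d (p j) l ^+ 2 <= (d (p j) z + d z l) ^+ 2.
  by rewrite ler_sqr ?nnegrE //; apply: addr_ge0.
have h5 : 0 <= (d (p j) z - 1) ^+ 2 by apply: sqr_ge0.
nra.
Qed.

End HadFacts.

Lemma small_inv (R : realType) (e : R) : 0 < e ->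
  exists N : nat, forall n, (N <= n)%N -> n.+1%:R^-1 < e.
Proof.
move=> e0; exists (Num.Def.archi_bound e^-1) => n hn.
have e0' : 0 <= e^-1 by rewrite invr_ge0 ltW.
have h := archi_boundP e0'.
rewrite invf_plt ?posrE //; apply: (lt_le_trans h).
by rewrite ler_nat; apply: (leq_trans hn).
Qed.

Section HadExist.
Variables (R : realType) (X : Type) (d : X -> X -> R).
Hypothesis hd : hadamard d.
Variables (I : Type) (J : seq I) (w : I -> R) (p : I -> X) (x0 : X).
Hypothesis w_ge0 : forall j, 0 <= w j.
Hypothesis w_sum : \sum_(j <- J) w j = 1.

Local Notation F := (Fw d J w p).

Lemma Fw_exists : exists z, forall z', F z <= F z'.
Proof.
pose S := [set F z | z in [set: X]].
have hS : has_inf S.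
  split; first by exists (F x0), x0.
  by exists 0 => _ [z _ <-]; apply: (Fw_ge0 d J p w_ge0).
pose I0 := inf S.
have I0le z : I0 <= F z by apply: ge_inf (proj2 hS) _ _; exists z.
have I0ge0 : 0 <= I0 by apply: lb_le_inf (proj1 hS) _ => _ [z _ <-]; apply: (Fw_ge0 d J p w_ge0).
have : forall n : nat, exists z, F z < I0 + n.+1%:R^-1.
  move=> n; have hn : 0 < n.+1%:R^-1 :> R by rewrite invr_gt0 ltr0Sn.
  have [_ [z _ <-] hz] := inf_adherent hn hS.
  by exists z.
case/choice => u hu.
have cau n m : d (u n) (u m) ^+ 2 <= 2 * n.+1%:R^-1 + 2 * m.+1%:R^-1.
  have [mm hm] := Fw_mid hd p w_ge0 w_sum (u n) (u m).
  have := I0le mm; have := hu n; have := hu m; move=> h1 h2 h3.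
  move: h1 h2 h3 hm; set A := n.+1%:R^-1; set B := m.+1%:R^-1; set D := d (u n) (u m) ^+ 2; lra.
have [l hl] : exists l, forall e : R, 0 < e -> exists N : nat,
        forall k : nat, (N <= k)%N -> d (u k) l < e.
  apply: (d_complete hd) => e e0.
  have [N hN] := small_inv (divr_gt0 (mulr_gt0 e0 e0) (ltr0Sn R 3)).
  exists N => m k hm hk.
  have := cau m k; have := hN _ hm; have := hN _ hk.
  have := d_ge0 hd (u m) (u k).
  set A := m.+1%:R^-1; set B := k.+1%:R^-1; set D := d (u m) (u k).
  set E := e * e / 3.+1%:R => h0 h1 h2 h3.
  have hE : E * 4 = e * e by rewrite /E mulfVK.
  have h4 : D ^+ 2 < e * e by lra.
  by rewrite -ltr_sqr ?nnegrE ?(ltW e0) // expr2.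
exists l => z'; apply: le_trans (I0le z'); apply/ler_addgt0Pr => e e0.
pose B := I0 + 2.
have B1 : 1 <= B by rewrite /B; lra.
have [N1 hN1] := small_inv (divr_gt0 e0 (ltr0Sn R 1)).
have [N2 hN2] := hl 1 ltr01.
have [N3 hN3] := hl (e / (8 * B)) (divr_gt0 e0 (mulr_gt0 (ltr0Sn R 7) (lt_le_trans ltr01 B1))).
pose k := maxn N1 (maxn N2 N3).
have k1 : (N1 <= k)%N by rewrite leq_maxl.
have k2 : (N2 <= k)%N by rewrite /k (leq_trans (leq_maxl N2 N3)) ?leq_maxr.
have k3 : (N3 <= k)%N by rewrite /k (leq_trans (leq_maxr N2 N3)) ?leq_maxr.
have hk0 : k.+1%:R^-1 <= (1 : R) by rewrite invf_le1 // ler1n.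
have B0 : 0 < 8 * B by rewrite mulr_gt0 // (lt_le_trans ltr01 B1).
have hB : e / (8 * B) * (8 * B) = e by rewrite mulfVK // gt_eqF.
have hq0 : 0 < e / (8 * B) by rewrite divr_gt0.
have hF := Fw_cont hd p w_ge0 w_sum (u k) l.
have h1 := hN1 _ k1; have h2 := hN2 _ k2; have h3 := hN3 _ k3; have h4 := hu k.
have h5 := d_ge0 hd (u k) l; have h6 := Fw_ge0 d J p w_ge0 (u k).
move: hF h1 h2 h3 h4 h5 h6 hk0 hB hq0 B1 I0ge0.
rewrite /B; set del := d (u k) l; set fk := F (u k); set q := e / (8 * (I0 + 2)).
set t := k.+1%:R^-1; set hh := e / 1.+1%:R.
move=> hF h1 h2 h3 h4 h5 h6 hk0 hB hq0 B1 I0ge0.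
have hh2 : hh * 2 = e by rewrite /hh mulfVK.
have hA : del * (fk + 1) <= q * (I0 + 2).
  by apply: ler_pM => //; [lra | lra | lra].
have hC : del ^+ 2 <= del by rewrite expr2; apply: ler_piMr => //; lra.
have hq : q <= e / 8%:R.
  rewrite ler_pdivlMr // -hB; apply: ler_wpM2l; first lra.
  lra.
have h8 : e / 8%:R * 8 = e by rewrite mulfVK.
lra.
Qed.

End HadExist.

Section Mask.
Variables (R : realType) (s : nat) (a : Zs s -> R) (r : seq (Zs s)).
Hypothesis ar : forall i, i \notin r -> a i = 0.

Definition half (v : Zs s) : Zs s := map_mx (fun z : int => (z %/ 2)%Z) v.

Lemma half2 j : half (j *+ 2) = j.
Proof.
apply/matrixP => k l; rewrite /half mxE mulmxnE.
have -> : j k l *+ 2 = j k l * 2 by rewrite mulr_natr.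
by rewrite mulzK.
Qed.

Definition Jm i := undup [seq half (i - rho) | rho <- r].

Lemma Jm_uniq i : uniq (Jm i). Proof. exact: undup_uniq. Qed.

Lemma Jm_supp i j : a (i - j *+ 2) != 0 -> j \in Jm i.
Proof.
move=> h; rewrite mem_undup; apply/mapP; exists (i - j *+ 2).
  by apply: contraNT h => /ar ->.
by rewrite opprB addrC subrK half2.
Qed.

Lemma fsum_Jm i (f : Zs s -> R) :
  \sum_(j \in [set: Zs s]) a (i - j *+ 2) * f j =
  \sum_(j <- Jm i) a (i - j *+ 2) * f j.
Proof.
rewrite (fsbigE (Jm i)) ?Jm_uniq //.
  by apply: eq_bigl => j; rewrite in_setT.
move=> j _ hj; have [/eqP -> | /Jm_supp] := boolP (a (i - j *+ 2) == 0).
  by rewrite mul0r.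
by rewrite (negPf hj).
Qed.

Hypothesis a_ge0 : forall i, 0 <= a i.
Hypothesis a_sum : forall i, \sum_(j \in [set: Zs s]) a (i - j *+ 2) = 1.

Lemma Jm_sum i : \sum_(j <- Jm i) a (i - j *+ 2) = 1.
Proof.
transitivity (\sum_(j <- Jm i) a (i - j *+ 2) * 1).
  by apply: eq_bigr => j _; rewrite mulr1.
rewrite -fsum_Jm; under eq_fsbigr do rewrite mulr1; exact: a_sum.
Qed.

Variables (X : Type) (d : X -> X -> R).
Hypothesis hd : hadamard d.

Definition Fm (y : Zs s -> X) i := Fw d (Jm i) (fun j => a (i - j *+ 2)) y.

Lemma scheme_Fm y i : scheme d a y i =
  argmin (y i) (Fm y i).
Proof.
rewrite /scheme /Fm /Fw; congr argmin; apply: funext => z.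
exact: fsum_Jm.
Qed.

Lemma scheme_min y i z : Fm y i (scheme d a y i) <= Fm y i z.
Proof.
rewrite scheme_Fm /argmin; move: z.
apply: (epsilon_spec (inhabits (y i)) (fun y0 => forall z, Fm y i y0 <= Fm y i z)).
exact: (Fw_exists hd y (y i) (fun j => a_ge0 (i - j *+ 2)) (Jm_sum i)).
Qed.

Lemma scheme_unique y i v : Fm y i v <= Fm y i (scheme d a y i) ->
  v = scheme d a y i.
Proof.
move=> h; exact: (@Fw_unique _ _ _ hd _ _ _ y (fun j => a_ge0 (i - j *+ 2)) (Jm_sum i) _ _ (@scheme_min y i) h).
Qed.

Lemma Fm_ge0 y i z : 0 <= Fm y i z.
Proof. exact: (Fw_ge0 d (Jm i) y (fun j => a_ge0 (i - j *+ 2))). Qed.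

Lemma scheme_bounded y c M : 0 <= M -> (forall i, d (y i) c <= M) ->
  forall i, d (scheme d a y i) c <= 2 * M.
Proof.
move=> M0 hy i; set m := scheme d a y i.
have h1 := Fw_bound hd y (fun j => a_ge0 (i - j *+ 2)) (Jm_sum i) m c.
have h2 : Fm y i m <= Fm y i c by apply: scheme_min.
have h3 : Fm y i c <= M ^+ 2.
  rewrite /Fm /Fw -[M ^+ 2]mul1r -(Jm_sum i) mulr_suml.
  apply: ler_sum => j _; apply: ler_wpM2l => //.
  by rewrite ler_sqr ?nnegrE // (d_ge0 hd).
have h4 : d m c ^+ 2 <= (2 * M) ^+ 2.
  move: h1; rewrite -/(Fm y i m) -/(Fm y i c) => h1.
  have := Fm_ge0 y i m; have := Fm_ge0 y i c; nra.
by rewrite -ler_sqr ?nnegrE ?(d_ge0 hd) // mulr_ge0.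
Qed.

End Mask.

Section Omega.
Variable (s : nat).
Local Notation Om := (OmegaT s).

Definition dep (m : nat) (T : Type) (f : Om -> T) :=
  forall w w' : Om, (forall i, (i <= m)%N -> Xn i w = Xn i w') -> f w = f w'.

Definition pref (m : nat) (w : Om) : m.+1.-tuple (Zs s) :=
  [tuple Xn (nat_of_ord i) w | i < m.+1].

Definition ext (m : nat) (t : m.+1.-tuple (Zs s)) : Om := fun i => nth 0 t i.

Lemma pref_eq m (w w' : Om) :
  pref m w = pref m w' <-> forall i, (i <= m)%N -> Xn i w = Xn i w'.
Proof.
split.
  move=> h i im; have := congr1 (fun t => tnth t (Ordinal (im : (i < m.+1)%N))) h.
  by rewrite !tnth_mktuple.
move=> h; apply: eq_from_tnth => i; rewrite !tnth_mktuple; apply: h.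
by rewrite -ltnS.
Qed.

Lemma Xn_ext m (t : m.+1.-tuple (Zs s)) i : Xn i (ext t) = nth 0 t i.
Proof. by []. Qed.

Lemma pref_ext m (t : m.+1.-tuple (Zs s)) : pref m (ext t) = t.
Proof.
apply: eq_from_tnth => i; rewrite tnth_mktuple Xn_ext.
by rewrite (tnth_nth 0).
Qed.

Lemma dep_ext m T (f : Om -> T) w : dep m f -> f w = f (ext (pref m w)).
Proof. by move=> h; apply: h; apply/pref_eq; rewrite pref_ext. Qed.

Lemma meas_gen k (A : set (Zs s)) : measurable (Xn k @^-1` A : set Om).
Proof. by apply: sub_gen_smallest; exists k, A. Qed.

Lemma meas_cyl m (u : nat -> Zs s) :
  measurable [set w : Om | forall i, (i <= m)%N -> Xn i w = u i].
Proof.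
have -> : [set w : Om | forall i, (i <= m)%N -> Xn i w = u i] =
   \bigcap_(i in [set i | (i <= m)%N]) (Xn i @^-1` [set u i] : set Om).
  by apply/seteqP; split => w /= h i /h.
by apply: bigcap_measurableType => k _; apply: meas_gen.
Qed.

Lemma meas_pref m (t : m.+1.-tuple (Zs s)) : measurable [set w : Om | pref m w = t].
Proof.
have -> : [set w : Om | pref m w = t] =
  [set w : Om | forall i, (i <= m)%N -> Xn i w = nth 0 t i].
  apply/seteqP; split => w /=.
    move=> <- i im; rewrite -Xn_ext; move: i im; apply/pref_eq; by rewrite pref_ext.
  by move=> h; rewrite -[t]pref_ext; apply/pref_eq => i /h.
exact: meas_cyl.
Qed.

Lemma meas_dep m T (f : Om -> T) (B : set T) : dep m f -> measurable (f @^-1` B).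
Proof.
move=> hf.
pose C n : set Om := if @pickle_inv (m.+1.-tuple (Zs s)) n is Some t
  then [set w | pref m w = t /\ B (f (ext t))] else set0.
have -> : f @^-1` B = \bigcup_n C n.
  apply/seteqP; split => w /=.
    move=> hB; exists (pickle (pref m w)) => //.
    by rewrite /C pickleK_inv; split => //; rewrite -dep_ext.
  case=> n _; rewrite /C; case: pickle_inv => [t|] //= [ht hB].
  by rewrite (dep_ext w hf) ht.
apply: bigcupT_measurable => n; rewrite /C; case: pickle_inv => [t|] //.
have [hB|hB] := pselect (B (f (ext t))).
  have -> : [set w : Om | pref m w = t /\ B (f (ext t))] = [set w | pref m w = t].
    by apply/seteqP; split => w /= [].
  exact: meas_pref.
have -> : [set w : Om | pref m w = t /\ B (f (ext t))] = set0.
  by apply/seteqP; split => w //= [].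
exact: measurable0.
Qed.

Lemma measfun_dep (R : realType) m (f : Om -> \bar R) : dep m f -> measurable_fun setT f.
Proof. by move=> hf _ Y _; rewrite setTI; exact: (@meas_dep m _ f Y hf). Qed.

Lemma Ffilt_gen k m (A : set (Zs s)) : (k <= m)%N -> Ffilt s m (Xn k @^-1` A).
Proof. by move=> km; apply: sub_gen_smallest; exists k, A. Qed.

Lemma Ffilt_sat m (A : set Om) : Ffilt s m A ->
  forall w w' : Om, (forall i, (i <= m)%N -> Xn i w = Xn i w') -> A w -> A w'.
Proof.
pose sat (A : set Om) := forall w w' : Om,
  (forall i, (i <= m)%N -> Xn i w = Xn i w') -> A w -> A w'.
move=> hA; suff : sat A by [].
apply: (@smallest_sub _ _ _ sat) hA.
  split.
  - by move=> w w' _.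
  - move=> B hB w w' h [_ nBw]; split => // Bw'; apply: nBw.
    by apply: (hB w' w) => // i /h ->.
  - move=> F hF w w' h [k _ Fk]; exists k => //; exact: (hF k w w' h).
move=> _ [k [B [km ->]]] w w' h /=; rewrite /Xn => hw.
by have := h k km; rewrite /Xn => <-.
Qed.

End Omega.

Lemma L2_dep (R : realType) (X : Type) (d : X -> X -> R) (s m : nat)
  (Z : OmegaT s -> X) : hadamard d ->
  measurable_wrt d (Ffilt s m) Z -> dep m Z.
Proof.
move=> hd hZ w w' h.
have [//|hne] := pselect (Z w = Z w').
pose rr := d (Z w) (Z w').
have rr0 : 0 < rr.
  rewrite lt_neqAle (d_ge0 hd) andbT eq_sym; apply/eqP => /(d_eq0 hd).
  exact: hne.
pose U := [set z | d (Z w) z < rr].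
have oU : openX d U.
  move=> z Uz; exists (rr - d (Z w) z); split; first by rewrite subr_gt0.
  move=> y hy; rewrite /U /=; have := d_tri hd (Z w) z y; lra.
have := Ffilt_sat (hZ U oU) h; rewrite /U /= (d_xx hd) => /(_ rr0).
by rewrite lt_irreflexive.
Qed.

Section PartInt.
Local Open Scope ereal_scope.
Variables (R : realType) (s : nat) (P : probability (OmegaT s) R).

Lemma part_integral (I : countType) (A : I -> set (OmegaT s))
  (c : I -> \bar R) (f : OmegaT s -> \bar R) :
  (forall i, measurable (A i)) ->
  (forall i j w, A i w -> A j w -> i = j) ->
  (forall w, exists i, A i w) ->
  (forall i w, A i w -> f w = c i) ->
  (forall i, 0 <= c i) ->
  measurable_fun setT f ->
  \int[P]_w f w = \esum_(i in [set: I]) (c i * P (A i)).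
Proof.
move=> mA dA cA fA c0 mf.
pose B n := if @pickle_inv I n is Some i then A i else set0.
have mB n : measurable (B n) by rewrite /B; case: pickle_inv.
have tB : trivIset setT B.
  move=> n k _ _ [w []]; rewrite /B.
  case hn : (pickle_inv n) => [i|] //; case hk : (pickle_inv k) => [j|] //.
  move=> Ai Aj; have ij := dA _ _ _ Ai Aj.
  have e1 : pickle i = n by have := @pickle_invK I n; rewrite hn.
  have e2 : pickle j = k by have := @pickle_invK I k; rewrite hk.
  by rewrite -e1 -e2 ij.
have cov : \bigcup_n B n = setT.
  apply/seteqP; split => // w _; have [i Ai] := cA w.
  by exists (pickle i) => //; rewrite /B pickleK_inv.
have f0 w : 0 <= f w by have [i Ai] := cA w; rewrite (fA _ _ Ai).
pose g n := if @pickle_inv I n is Some i then c i * P (A i) else 0.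
transitivity (\int[P]_(w in \bigcup_n B n) f w); first by rewrite cov.
rewrite ge0_integral_bigcup //; last by rewrite cov.
transitivity (\sum_(n <oo) g n).
  apply: eq_eseriesr => n _; rewrite /g /B; case: pickle_inv => [i|].
    rewrite -integral_cst //; apply: eq_integral => w; rewrite inE => Aw.
    exact: fA.
  exact: integral_set0.
have g0 n : 0 <= g n by rewrite /g; case: pickle_inv => // i; rewrite mule_ge0.
rewrite nneseries_esumT //.
transitivity (\esum_(i in [set: I]) g (pickle i)); last first.
  by apply: eq_esum => i _; rewrite /g pickleK_inv.
rewrite -(esum_image [set: I] pickle (fun n => g n)); last first.
  by move=> i j _ _; apply: (pcan_inj pickleK_inv).
rewrite [RHS]esum_mkcond; apply: eq_esum => n _.
case: ifPn => [|hn]; first by move=> _.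
rewrite /g; case hp : (pickle_inv n) => [i|] //.
exfalso; move/negP: hn; apply; rewrite inE; exists i => //.
by have := @pickle_invK I n; rewrite hp.
Qed.

End PartInt.

Section Chain.
Variables (R : realType) (s : nat) (a alpha : Zs s -> R)
  (P : probability (OmegaT s) R).
Hypothesis chain : is_chain_law a alpha P.
Hypothesis a_ge0 : forall i, 0 <= a i.
Hypothesis alpha_ge0 : forall i, 0 <= alpha i.
Local Notation Om := (OmegaT s).

Definition rho m (w : Om) : R :=
  alpha (Xn 0 w) * \prod_(k < m) a (Xn k w - Xn k.+1 w *+ 2).

Lemma rho_ge0 m w : 0 <= rho m w.
Proof. by apply: mulr_ge0 => //; apply: prodr_ge0 => k _. Qed.

Lemma rho_S m w : rho m.+1 w = rho m w * a (Xn m w - Xn m.+1 w *+ 2).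
Proof. by rewrite /rho big_ord_recr /= mulrA. Qed.

Lemma rho_dep m : dep m (rho m).
Proof.
move=> w w' h; rewrite /rho (h 0%N) //; congr (_ * _); apply: eq_bigr => k _.
by rewrite (h k) ?(h k.+1) // ltnW.
Qed.

Lemma P_cyl m (v : Om) :
  P [set w | forall i, (i <= m)%N -> Xn i w = Xn i v] = (rho m v)%:E.
Proof. exact: (chain m (fun i => Xn i v)). Qed.

Variable k : nat.
Definition ext2 (t : k.+1.-tuple (Zs s)) (j : Zs s) : Om :=
  fun i => if (i <= k)%N then nth 0 t i else j.

Definition cell (p : k.+1.-tuple (Zs s) * Zs s) : set Om :=
  [set w | pref k w = p.1 /\ Xn k.+1 w = p.2].

Lemma cell_eq p : cell p =
  [set w | forall i, (i <= k.+1)%N -> Xn i w = Xn i (ext2 p.1 p.2)].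
Proof.
case: p => t j; apply/seteqP; split => w /=.
  case=> ht hj i; rewrite leq_eqVlt => /orP [/eqP ->|ik].
    by rewrite hj /Xn /ext2 ltnn.
  rewrite ltnS in ik; rewrite /Xn /ext2 ik -(Xn_ext t i) -/(Xn i w).
  by move: i ik; apply/pref_eq; rewrite pref_ext.
move=> h; split.
  rewrite -[t]pref_ext; apply/pref_eq => i ik.
  by rewrite h ?(leqW ik) // /Xn /ext2 ik.
by rewrite h // /Xn /ext2 ltnn.
Qed.

Lemma cell_ext2 t j : cell (t, j) (ext2 t j).
Proof. by rewrite cell_eq => i _. Qed.

Lemma meas_cell p : measurable (cell p).
Proof. by rewrite cell_eq; apply: meas_cyl. Qed.

Lemma P_cell p : P (cell p) = (rho k.+1 (ext2 p.1 p.2))%:E.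
Proof. by rewrite cell_eq P_cyl. Qed.

Lemma rho_ext2 t j :
  rho k.+1 (ext2 t j) = rho k (ext t) * a (nth 0 t k - j *+ 2).
Proof.
rewrite rho_S; congr (_ * _).
  by apply: rho_dep => i ik; rewrite /Xn /ext2 /ext ik.
by rewrite /Xn /ext2 leqnn ltnn.
Qed.

Local Open Scope ereal_scope.
Lemma decomp (h : Om -> \bar R) : dep k.+1 h -> (forall w, 0 <= h w) ->
  \int[P]_w h w = \esum_(p in [set: k.+1.-tuple (Zs s) * Zs s])
      (h (ext2 p.1 p.2) * (rho k.+1 (ext2 p.1 p.2))%:E).
Proof.
move=> hd h0.
rewrite (@part_integral R s P _ cell (fun p => h (ext2 p.1 p.2))).
- by apply: eq_esum => p _; rewrite P_cell.
- exact: meas_cell.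
- move=> [t j] [t' j'] w [/= <- <-] [/= <- <-] //.
- by move=> w; exists (pref k w, Xn k.+1 w).
- move=> p w; rewrite cell_eq => hw; apply: hd => i ik; exact: hw.
- by move=> p; apply: h0.
- exact: measfun_dep hd.
Qed.

End Chain.

Lemma esum_le_eq (R : realType) (I : choiceType) (f g : I -> \bar R) :
  (forall i, (0 <= g i)%E) -> (forall i, (g i <= f i)%E) ->
  (\esum_(i in [set: I]) f i <= \esum_(i in [set: I]) g i)%E ->
  (\esum_(i in [set: I]) g i < +oo)%E -> forall i, f i = g i.
Proof.
move=> g0 gf hle hfin i0.
have f0 i : (0 <= f i)%E by apply: le_trans (gf i).
have split (h : I -> \bar R) : (forall i, 0 <= h i)%E ->
    \esum_(i in [set: I]) h i = (h i0 + \esum_(i in [set: I] `&` ~` [set i0]) h i)%E.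
  move=> h0; rewrite (esumID [set i0]) //; congr (_ + _)%E.
  by rewrite setTI esum_set1.
move: hle hfin; rewrite (split f f0) (split g g0).
set Sf := esum _ f; set Sg := esum _ g => hle hfin.
have SgSf : (Sg <= Sf)%E by apply: le_esum => i _; exact: gf.
have Sg0 : (0 <= Sg)%E by apply: esum_ge0 => i _; exact: g0.
have Sgfin : Sg \is a fin_num.
  rewrite ge0_fin_numE //; apply: le_lt_trans hfin.
  by rewrite leeDr.
apply/eqP; rewrite eq_le gf andbT.
rewrite -(leeD2rE _ _ Sgfin); apply: le_trans hle.
by rewrite leeD2l.
Qed.

Lemma int_cst_fin (R : realType) s (P : probability (OmegaT s) R) (c : R) :
  (\int[P]_w (cst c%:E) w < +oo)%E.
Proof.
rewrite integral_cst //. set u := (X in (_ * X)%E).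
have -> : u = 1%E by exact: probability_setT.
by rewrite mule1 ltry.
Qed.

Section Step.
Variables (R : realType) (s : nat) (a alpha : Zs s -> R)
  (P : probability (OmegaT s) R) (r : seq (Zs s)) (X : Type) (d : X -> X -> R).
Hypothesis chain : is_chain_law a alpha P.
Hypothesis a_ge0 : forall i, 0 <= a i.
Hypothesis alpha_ge0 : forall i, 0 <= alpha i.
Hypothesis ar : forall i, i \notin r -> a i = 0.
Hypothesis a_sum : forall i, \sum_(j \in [set: Zs s]) a (i - j *+ 2) = 1.
Hypothesis hd : hadamard d.
Local Notation Om := (OmegaT s).

Lemma esum_fin (f : Zs s -> R) i : (forall j, 0 <= f j) ->
  (forall j, j \notin Jm r i -> f j = 0) ->
  \esum_(j in [set: Zs s]) (f j)%:E = (\sum_(j <- Jm r i) f j)%:E.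
Proof.
move=> f0 fJ.
rewrite (esumID [set` Jm r i]); last by move=> j _; rewrite lee_fin.
rewrite [X in (_ + X)%E]esum1 ?adde0; last first.
  by move=> j [_ /= hj]; rewrite fJ //; apply/negP.
rewrite setTI esum_fset; [|exact: finite_seq|by move=> j _; rewrite lee_fin].
by rewrite -fsbig_seq ?Jm_uniq // sumEFin.
Qed.

Variables (k : nat) (y : Zs s -> X).

Local Notation Sy := (scheme d a y).
Definition Zk (w : Om) := Sy (Xn k w).
Definition goodY (Y : Om -> X) :=
  dep k.+1 Y /\ forall w, rho a alpha k.+1 w != 0 -> Y w = y (Xn k.+1 w).

Lemma cost_decomp (Y V : Om -> X) : goodY Y -> dep k V ->
  (\int[P]_w ((d (Y w) (V w)) ^+ 2)%:E)%E =
  \esum_(t in [set: k.+1.-tuple (Zs s)])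
     (rho a alpha k (ext t) * Fm a r d y (nth 0 t k) (V (ext t)))%:E.
Proof.
move=> [hY hY2] hV.
rewrite (@decomp R s a alpha P chain k (fun w => ((d (Y w) (V w)) ^+ 2)%:E)); last 2 first.
- move=> w w' h /=; rewrite (hY w w' h) (hV w w') // => i ik.
  by apply: h; rewrite leqW.
- by move=> w; rewrite lee_fin sqr_ge0.
transitivity (\esum_(p in [set: k.+1.-tuple (Zs s) * Zs s])
   (rho a alpha k (ext p.1) * (a (nth 0 p.1 k - p.2 *+ 2) *
       d (y p.2) (V (ext p.1)) ^+ 2))%:E).
  apply: eq_esum => -[t j] _ /=; rewrite rho_ext2.
  have [h0|h0] := eqVneq (rho a alpha k (ext t) * a (nth 0 t k - j *+ 2)) 0.
    by rewrite h0 mule0 mulrA h0 mul0r.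
  rewrite hY2; last by rewrite rho_ext2.
  have -> : Xn k.+1 (ext2 t j) = j by rewrite /Xn /ext2 ltnn.
  have -> : V (ext2 t j) = V (ext t).
    by apply: hV => i ik; rewrite /Xn /ext2 /ext ik.
  by rewrite -EFinM; congr (_%:E); ring.
have -> : [set: k.+1.-tuple (Zs s) * Zs s] =
   [set: k.+1.-tuple (Zs s)] `*`` (fun _ => [set: Zs s]).
  by apply/seteqP; split.
rewrite -(@esum_esum _ _ _ [set: k.+1.-tuple (Zs s)] (fun=> [set: Zs s]) (fun t j => (rho a alpha k (ext t) * (a (nth 0 t k - j *+ 2) * d (y j) (V (ext t)) ^+ 2))%:E)); last first.
  move=> t j _ _; rewrite lee_fin; apply: mulr_ge0; first exact: rho_ge0.
  by apply: mulr_ge0 => //; apply: sqr_ge0.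
apply: eq_esum => t _.
rewrite (@esum_fin _ (nth 0 t k)).
- by rewrite /Fm /Fw mulr_sumr.
- move=> j; apply: mulr_ge0; first exact: rho_ge0.
  by apply: mulr_ge0 => //; apply: sqr_ge0.
- move=> j hj; have [h0|/(Jm_supp ar)] := eqVneq (a (nth 0 t k - j *+ 2)) 0.
    by rewrite h0 mul0r mulr0.
  by rewrite (negPf hj).
Qed.

Variables (c : X) (M : R).
Hypothesis M0 : 0 <= M.
Hypothesis yb : forall i, d (y i) c <= M.

Lemma Zk_dep : dep k Zk.
Proof. by move=> w w' h; rewrite /Zk h. Qed.

Lemma Zk_L2 : L2 d P (Ffilt s k) Zk.
Proof.
split.
- move=> U _; exact: (Ffilt_gen (Sy @^-1` U) (leqnn k)).
- exists (fun n => if @pickle_inv (Zs s) n is Some i then Sy i else c).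
  move=> w eps e0; exists (pickle (Xn k w)); rewrite pickleK_inv.
  by rewrite /Zk (d_xx hd).
- exists c.
  have hb w : d (Zk w) c <= 2 * M by apply: (scheme_bounded ar a_ge0 a_sum hd M0 yb).
  apply: (@le_lt_trans _ _ (\int[P]_w (cst (((2 * M) ^+ 2)%:E)) w)%E).
    apply: ge0_le_integral => //.
    + by move=> w _; rewrite lee_fin sqr_ge0.
    + apply: (measfun_dep (m := k)) => w w' h; by rewrite (Zk_dep h).
    + move=> w _; rewrite lee_fin ler_sqr ?nnegrE ?(d_ge0 hd) //.
      by rewrite mulr_ge0.
  exact: int_cst_fin.
Qed.

Lemma Zk_condexp Y : goodY Y -> is_condexp d P (Ffilt s k) Y Zk.
Proof.
move=> hY; split; first exact: Zk_L2.
move=> Z' [hZ' _ _]; have dZ' := L2_dep hd hZ'.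
rewrite (cost_decomp hY Zk_dep) (cost_decomp hY dZ').
apply: le_esum => t _; rewrite lee_fin; apply: ler_wpM2l; first exact: rho_ge0.
rewrite /Zk.
exact: (scheme_min ar a_ge0 a_sum hd).
Qed.

Lemma condexp_unique Y Z' : goodY Y -> is_condexp d P (Ffilt s k) Y Z' ->
  dep k Z' /\ forall w, rho a alpha k w != 0 -> Z' w = Zk w.
Proof.
move=> hY [[hZ' _ _] hmin].
have dZ' := L2_dep hd hZ'; split => //.
have hle := hmin Zk Zk_L2.
rewrite (cost_decomp hY Zk_dep) (cost_decomp hY dZ') in hle.
have hY0 : goodY (fun w => y (Xn k.+1 w)).
  by split => // w w' h; rewrite h.
have fin := cost_decomp hY0 Zk_dep.
have key := esum_le_eq _ _ hle.
have {key} key : forall t : k.+1.-tuple (Zs s),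
  (rho a alpha k (ext t) * Fm a r d y (nth 0 t k) (Z' (ext t)))%:E =
  (rho a alpha k (ext t) * Fm a r d y (nth 0 t k) (Zk (ext t)))%:E.
  apply: key.
  - by move=> t; rewrite lee_fin mulr_ge0 ?rho_ge0 ?(Fm_ge0 r a_ge0).
  - move=> t; rewrite lee_fin; apply: ler_wpM2l; first exact: rho_ge0.
    exact: (scheme_min ar a_ge0 a_sum hd).
  - rewrite -fin.
    have hb w : d (y (Xn k.+1 w)) (Zk w) <= 3 * M.
      apply: le_trans (d_tri hd _ c _) _.
      have := scheme_bounded ar a_ge0 a_sum hd M0 yb (Xn k w).
      rewrite (d_sym hd c) -/(Zk w) => h1; have := yb (Xn k.+1 w); lra.
    apply: (@le_lt_trans _ _ (\int[P]_w (cst (((3 * M) ^+ 2)%:E)) w)%E).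
      apply: ge0_le_integral => //.
      + by move=> w _; rewrite lee_fin sqr_ge0.
      + apply: (measfun_dep (m := k.+1)) => w w' h.
        rewrite (h k.+1) // (Zk_dep (w := w) (w' := w')) // => i ik.
        by apply: h; rewrite leqW.
      + move=> w _; rewrite lee_fin ler_sqr ?nnegrE ?(d_ge0 hd) //.
        by rewrite mulr_ge0.
    exact: int_cst_fin.
move=> w hw; set t := pref k w.
have ew : forall i, (i <= k)%N -> Xn i w = Xn i (ext t).
  by apply/pref_eq; rewrite pref_ext.
rewrite (dZ' w (ext t) ew) (@Zk_dep w (ext t) ew).
have hr : rho a alpha k (ext t) != 0 by rewrite -(@rho_dep _ _ a alpha k w (ext t) ew).
move: (key t) => /eqP; rewrite eqe => /eqP /(mulfI hr) hF.
apply: (scheme_unique ar a_ge0 a_sum hd).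
by rewrite /Zk in hF *; rewrite hF.
Qed.

End Step.

Unset Implicit Arguments.
Set Strict Implicit.
Theorem mainTheorem2 (R : realType) (X : Type) (d : X -> X -> R) (s : nat)
    (a : Zs s -> R) (x : Zs s -> X) (n : nat) (alpha : Zs s -> R)
    (P : probability (OmegaT s) R) :
  hadamard d -> is_mask a -> bounded_seq d x ->
  is_distribution alpha -> is_chain_law a alpha P ->
  (exists Z0 : OmegaT s -> X,
      is_filtered_condexp d P (Ffilt s) n (fun w => x (Xn n w)) Z0) /\
  (forall Z0 : OmegaT s -> X,
      is_filtered_condexp d P (Ffilt s) n (fun w => x (Xn n w)) Z0 ->
      {ae P, forall w, iter n (scheme d a) x (Xn 0 w) = Z0 w}).
Proof.
move=> hd [a_ge0 [r ar] a_sum] [M0 hM] [alpha_ge0 _] chain.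
pose y m := iter m (scheme d a) x.
pose c := x 0.
have yb m : exists M, 0 <= M /\ forall i, d (y m i) c <= M.
  elim: m => [|m [M [hM0 hMb]]].
    exists M0; split; last by move=> i; exact: hM.
    by apply: le_trans (hM 0 0); rewrite (d_xx hd).
  exists (2 * M); split; first by rewrite mulr_ge0.
  by move=> i; exact: (scheme_bounded ar a_ge0 a_sum hd hM0 hMb).
pose Zc k := fun w : OmegaT s => y (n - k)%N (Xn k w).
have yS k : (k < n)%N -> forall i, y (n - k)%N i = scheme d a (y (n - k.+1)%N) i.
  by move=> kn i; rewrite -(subnSK kn).
have goodZc k : (k < n)%N -> goodY a alpha k (y (n - k.+1)%N) (Zc k.+1).
  move=> kn; split; last by [].
  by move=> w w' h; rewrite /Zc h.
split.
  exists (Zc 0%N); exists Zc; split => //.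
    by apply: funext => w; rewrite /Zc subnn.
  move=> k kn.
  have [M [hM0 hMb]] := yb (n - k.+1)%N.
  have -> : Zc k = Zk a d k (y (n - k.+1)%N).
    by apply: funext => w; rewrite /Zc /Zk yS.
  exact: (Zk_condexp chain a_ge0 alpha_ge0 ar a_sum hd hM0 hMb (goodZc k kn)).
move=> Z0 [Z [ZN Z0e hZ]].
have key : forall j, (j <= n)%N -> dep (n - j)%N (Z (n - j)%N) /\
   forall w, rho a alpha (n - j)%N w != 0 -> Z (n - j)%N w = Zc (n - j)%N w.
  elim => [|j IH] jn.
    rewrite subn0 ZN; split; first by move=> w w' h; rewrite h.
    by move=> w _; rewrite /Zc subnn.
  have mn : (n - j.+1 < n)%N by rewrite ltn_subrL; apply/andP; split; last by apply: leq_ltn_trans jn.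
  have e : (n - j.+1).+1 = (n - j)%N by rewrite subnSK.
  have [IH1 IH2] := IH (ltnW jn).
  rewrite -e in IH1 IH2.
  have gY : goodY a alpha (n - j.+1)%N (y (n - (n - j.+1).+1)%N) (Z (n - j.+1).+1).
    split => // w hw; rewrite IH2 //.
  have [M [hM0 hMb]] := yb (n - (n - j.+1).+1)%N.
  have [D1 D2] := condexp_unique chain a_ge0 alpha_ge0 ar a_sum hd hM0 hMb gY
     (hZ _ mn).
  split => // w hw; rewrite D2 // /Zk /Zc yS //.
have [_ K0] := key n (leqnn n).
rewrite subnn Z0e in K0.
pose N := (Xn 0 @^-1` [set i | alpha i = 0] : set (OmegaT s)).
have mN : measurable N by apply: meas_gen.
have PN : P N = 0%E.
  have h1 := @integral_indic _ _ R P setT measurableT N mN.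
  rewrite setIT in h1; rewrite -h1.
  rewrite (@decomp R s a alpha P chain 0%N (fun w => (\1_N w)%:E)); last 2 first.
  - move=> w w' h /=; rewrite !indicE.
    have -> : (w \in N) = (w' \in N).
      by apply/idP/idP; rewrite !in_setE /N /preimage /= (h 0%N).
    by [].
  - by move=> w; rewrite lee_fin indicE; case: (_ \in _).
  apply: esum1 => p _.
  rewrite indicE; case: (boolP (ext2 p.1 p.2 \in N)) => hp; last by rewrite mul0e.
  move: hp; rewrite in_setE /N /preimage /= => hp.
  by rewrite /rho /= hp mul0r mule0.
hnf; exists N; split => // w /= hw.
rewrite /N /preimage /=; apply: contrapT => hne.
apply: hw; rewrite (K0 w); last by rewrite /rho big_ord0 mulr1; apply/eqP.
by rewrite /Zc subn0.
Qed.
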